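(* Let $S$ and $A$ be finite-dimensional quantum systems with Hilbert spaces $\mathcal H_S\cong\mathbb C^{d_S}$ and $\mathcal H_A\cong\mathbb C^{d_A}$, and let $H_S=\sum_{k=1}^{d_S}\epsilon_k|\epsilon_k\rangle\langle\epsilon_k|$ with $\epsilon_1<\epsilon_2<\dots<\epsilon_{d_S}$. Fix a real number $r\neq 0$ and the utility function $u(w)=\frac{1}{r}(1-e^{-rw})$. Let $\rho_{SA}$ be a density matrix on $\mathcal H_S\otimes\mathcal H_A$, $\rho_S=\mathrm{Tr}_A\rho_{SA}$, and let $\{|a\rangle\}_{a=1}^{d_A}$ be any orthonormal basis of $\mathcal H_A$ with projectors $\Pi^A_a=|a\rangle\langle a|$. Write the spectral decompositions $e^{-rH_S/2}\rho_S e^{-rH_S/2}=\sum_k u_k|u_k\rangle\langle u_k|$ with $u_1\ge u_2\ge\dots$, and, for each $a$ with $p_a>0$, $e^{-rH_S/2}\rho_{S|a}e^{-rH_S/2}=\sum_k u^a_k|u^a_k\rangle\langle u^a_k|$ with $u^a_1\ge u^a_2\ge\dots$. Set $y_k=e^{r\epsilon_k}/r$ (so $y_k<y_{k+1}$), $\tilde H_S=\sum_k y_k|u_k\rangle\langle u_k|$ and $\tilde\rho_{S|a}=e^{-rH_S/2}\rho_{S|a}e^{-rH_S/2}$. Then $$\mathcal U_{\{\Pi^A_a\}}(\rho_{SA})-\mathcal U(\rho_S)=\sum_{a:\,p_a>0}p_a\,\tilde{\mathcal E}(\tilde\rho_{S|a})\ge 0,$$ where $\tilde{\mathcal E}(\tilde\rho_{S|a})$,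 the ergotropy of the (non-normalized) operator $\tilde\rho_{S|a}$ with respect to $\tilde H_S$, is given explicitly by $$\tilde{\mathcal E}(\tilde\rho_{S|a})=\sum_{k,j}u^a_j\left(|\langle u_k|u^a_j\rangle|^2-\delta_{j,k}\right)y_k .$$
   Context: Conditional states: for an orthonormal basis $\{|a\rangle\}$ of $\mathcal H_A$, $p_a=\mathrm{Tr}[(I^S\otimes\Pi^A_a)\rho_{SA}]$ and, when $p_a>0$, $\rho_{S|a}=\mathrm{Tr}_A[(I^S\otimes\Pi^A_a)\rho_{SA}(I^S\otimes\Pi^A_a)]/p_a$. For a density matrix $\rho$ on $\mathcal H_S$ and a unitary $U$, the expected utility (with respect to the symmetric work quasiprobability) is $$\langle u(w)\rangle_{\rho,U}=\sum_{i,j,k}\mathrm{Re}\big(\langle\epsilon_i|\rho|\epsilon_j\rangle\langle\epsilon_j|U^\dagger|\epsilon_k\rangle\langle\epsilon_k|U|\epsilon_i\rangle\big)\,u\!\left(\tfrac{\epsilon_i+\epsilon_j}{2}-\epsilon_k\right),$$ the optimal expected utility is $\mathcal U(\rho)=\max_{U}\langle u(w)\rangle_{\rho,U}$ (maximum over unitaries on $\mathcal H_S$), and the daemonic expected utility is $\mathcal U_{\{\Pi^A_a\}}(\rho_{SA})=\sum_{a:\,p_a>0}p_a\,\mathcal U(\rho_{S|a})$. The ergotropy of a positive semidefinite operator $X$ with respect to a Hermitian operator $K$ is $\max_V\big(\mathrm{Tr}[KX]-\mathrm{Tr}[KVXV^\dagger]\big)$ over unitaries $V$. *)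

(* Defs.v *)
From HB Require Import structures.
From mathcomp Require Import all_boot all_order all_algebra.
From mathcomp Require Import complex mxtens.
From mathcomp Require Import classical_sets reals.
From mathcomp Require Import sequences exp.

Set Implicit Arguments.
Unset Strict Implicit.
Unset Printing Implicit Defensive.

Import Order.TTheory GRing.Theory Num.Theory.
Local Open Scope ring_scope.
Local Open Scope complex_scope.
Local Open Scope classical_set_scope.

Section QDefs.
Variable R : realType.
Local Notation C := (R[i]).

Definition adj {m n} (M : 'M[C]_(m, n)) : 'M[C]_(n, m) := map_mx Num.conj (M^T).

Definition hermitian {n} (M : 'M[C]_n) : Prop := adj M = M.

Definition psd {n} (M : 'M[C]_n) : Prop :=
  hermitian M /\ forall v : 'cV[C]_n, 0 <= (adj v *m M *m v) 0 0.

Definition density {n} (M : 'M[C]_n) : Prop := psd M /\ \tr M = 1.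

Definition unitary {n} (U : 'M[C]_n) : Prop := U \is unitarymx.

Definition RC (x : R) : C := x%:C.

Definition diagR {n} (d : 'I_n -> R) : 'M[C]_n := diag_mx (\row_k RC (d k)).

Definition sqnorm (z : C) : R := (complex.Re z) ^+ 2 + (complex.Im z) ^+ 2.

Definition utility (r w : R) : R := (1 - expR (- (r * w))) / r.

(* H_S = sum_k eps_k |eps_k><eps_k|, |eps_k> = k-th column of the unitary E.
   <eps_i| X |eps_j> = (adj E *m X *m E) i j. *)
Definition melt {n} (E X : 'M[C]_n) (i j : 'I_n) : C := (adj E *m X *m E) i j.

(* expected utility <u(w)>_{rho,U} w.r.t. the symmetric work quasiprobability *)
Definition exp_utility (r : R) {n} (E : 'M[C]_n) (eps : 'I_n -> R)
    (rho U : 'M[C]_n) : R :=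
  \sum_(i < n) \sum_(j < n) \sum_(k < n)
    complex.Re (melt E rho i j * melt E (adj U) j k * melt E U k i)
    * utility r ((eps i + eps j) / 2 - eps k).

(* optimal expected utility: max over unitaries (written as sup; the max is
   attained by compactness of the unitary group) *)
Definition opt_utility (r : R) {n} (E : 'M[C]_n) (eps : 'I_n -> R)
    (rho : 'M[C]_n) : R :=
  sup [set x : R | exists U : 'M[C]_n, unitary U /\ x = exp_utility r E eps rho U].

(* partial trace over A of an operator on H_S (x) H_A, with the index of
   |i> (x) |a> being mxtens_index (i, a) (the convention of *t) *)
Definition ptraceA {dS dA} (M : 'M[C]_(dS * dA)) : 'M[C]_dS :=
  \matrix_(i, j) \sum_(b < dA) M (mxtens_index (i, b)) (mxtens_index (j, b)).

(* projector |a><a|, |a> = a-th column of the unitary B *)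
Definition projA {dA} (B : 'M[C]_dA) (a : 'I_dA) : 'M[C]_dA :=
  col a B *m adj (col a B).

Definition liftA {dS dA} (B : 'M[C]_dA) (a : 'I_dA) : 'M[C]_(dS * dA) :=
  (1%:M : 'M[C]_dS) *t projA B a.

(* p_a = Tr[(I (x) Pi_a) rho] (real since rho is a density matrix) *)
Definition prob {dS dA} (B : 'M[C]_dA) (rho : 'M[C]_(dS * dA)) (a : 'I_dA) : R :=
  complex.Re (\tr (liftA B a *m rho)).

Definition cond_state {dS dA} (B : 'M[C]_dA) (rho : 'M[C]_(dS * dA)) (a : 'I_dA)
    : 'M[C]_dS :=
  RC ((prob B rho a)^-1) *: ptraceA (liftA B a *m rho *m liftA B a).

Definition daemonic_utility (r : R) {dS dA} (E : 'M[C]_dS) (eps : 'I_dS -> R)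
    (B : 'M[C]_dA) (rho : 'M[C]_(dS * dA)) : R :=
  \sum_(a < dA | 0 < prob B rho a) prob B rho a * opt_utility r E eps (cond_state B rho a).

Definition ergotropy {n} (K X : 'M[C]_n) : R :=
  sup [set x : R | exists V : 'M[C]_n, unitary V /\
        x = complex.Re (\tr (K *m X)) - complex.Re (\tr (K *m V *m X *m adj V))].

Definition expH (r : R) {n} (E : 'M[C]_n) (eps : 'I_n -> R) : 'M[C]_n :=
  E *m diagR (fun k => expR (- (r * eps k) / 2)) *m adj E.

Definition spec_decomp {n} (M W : 'M[C]_n) (u : 'I_n -> R) : Prop :=
  unitary W /\ (forall i j : 'I_n, (i <= j)%N -> u j <= u i) /\
  M = W *m diagR u *m adj W.

End QDefs.

(* Main.v *)
Require Import Defs.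
From HB Require Import structures.
From mathcomp Require Import all_boot all_order all_algebra.
From mathcomp Require Import complex mxtens.
From mathcomp Require Import classical_sets reals sequences exp.
From mathcomp Require Import ring lra zify.

Set Implicit Arguments.
Unset Strict Implicit.
Unset Printing Implicit Defensive.
Import Order.TTheory GRing.Theory Num.Theory.
Local Open Scope ring_scope.
Local Open Scope complex_scope.

Section S.
Variable R : realType.
Local Notation C := (R[i]).

Lemma adjM m n p (A : 'M[C]_(m, n)) (B : 'M[C]_(n, p)) : adj (A *m B) = adj B *m adj A.
Proof. by rewrite /adj trmx_mul map_mxM. Qed.

Lemma adjK m n (A : 'M[C]_(m, n)) : adj (adj A) = A.
Proof. by apply/matrixP=> i j; rewrite !mxE conjCK. Qed.

Lemma conjRC (x : R) : Num.conj (RC x) = RC x.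
Proof. by rewrite /RC; apply/eqP; rewrite eq_complex /= oppr0 !eqxx. Qed.

Lemma adj_diagR n (d : 'I_n -> R) : adj (diagR d) = diagR d.
Proof.
apply/matrixP=> i j; rewrite /adj /diagR !mxE.
case: (eqVneq i j) => [->|ne]; first by rewrite ?mxE conjRC.

by rewrite /= !mulr0n rmorph0.
Qed.

Lemma unitaryP n (U : 'M[C]_n) : unitary U -> U *m adj U = 1%:M /\ adj U *m U = 1%:M.
Proof.
move=> HU; have H := HU; move/unitarymxP: H => H; split; first exact H.
have := @mulmxKtV _ _ _ _ 1%:M U HU erefl. by rewrite mul1mx.
Qed.

Lemma unitary_adj n (U : 'M[C]_n) : unitary U -> unitary (adj U).
Proof. move=> HU; rewrite /unitary; apply/unitarymxP; have := adjK U; rewrite /adj => ->; by case: (unitaryP HU). Qed.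

Lemma unitaryM n (U V : 'M[C]_n) : unitary U -> unitary V -> unitary (U *m V).
Proof. exact: mul_unitarymx. Qed.

Lemma mul_conj_sq (z : C) : z * Num.conj z = RC (sqnorm z).
Proof.
case: z => a b. rewrite /RC /sqnorm /=. 
apply/eqP; rewrite eq_complex /=. apply/andP; split; apply/eqP; ring.
Qed.

Lemma sup_max (E : set R) x : E x -> (forall y, E y -> y <= x) -> sup E = x.
Proof.
move=> Ex ub; apply/le_anti/andP; split.
  by apply: ge_sup; [exists x | move=> y /ub].
by apply: (ub_le_sup (E:=E)) => //; exists x => y /ub.
Qed.

Lemma RCM (a b : R) : RC (a * b) = RC a * RC b.
Proof. by rewrite /RC; apply/eqP; rewrite eq_complex /= !mulr0 !mul0r subr0 addr0 !eqxx. Qed.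
Lemma RCD (a b : R) : RC (a + b) = RC a + RC b.
Proof. by rewrite /RC; apply/eqP; rewrite eq_complex /= addr0 !eqxx. Qed.
Lemma RC0 : RC (0:R) = 0. Proof. by []. Qed.
Lemma RC_sum I (s : seq I) (P : pred I) (F : I -> R) :
  RC (\sum_(i <- s | P i) F i) = \sum_(i <- s | P i) RC (F i).
Proof. exact: (big_morph _ RCD RC0). Qed.
Lemma ReRC (a : R) : complex.Re (RC a) = a. Proof. by []. Qed.

Lemma diagR_mul_l n p (d : 'I_n -> R) (X : 'M[C]_(n, p)) i j :
  (diagR d *m X) i j = RC (d i) * X i j.
Proof. by rewrite /diagR mul_diag_mx !mxE. Qed.
Lemma diagR_mul_r n p (d : 'I_p -> R) (X : 'M[C]_(n, p)) i j :
  (X *m diagR d) i j = X i j * RC (d j).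
Proof. by rewrite /diagR mul_mx_diag !mxE. Qed.

Lemma adj_entry m n (M : 'M[C]_(m, n)) i j : adj M i j = Num.conj (M j i).
Proof. by rewrite !mxE. Qed.

Lemma trace_form n (A B : 'M[C]_n) (y u : 'I_n -> R) :
  \tr (A *m diagR y *m adj A *m (B *m diagR u *m adj B)) =
  RC (\sum_(k < n) \sum_(j < n) y k * u j * sqnorm ((adj A *m B) k j)).
Proof.
set M := adj A *m B.
have -> : \tr (A *m diagR y *m adj A *m (B *m diagR u *m adj B)) =
          \tr (diagR y *m M *m diagR u *m adj M).
  rewrite /M !adjM adjK -!mulmxA mxtrace_mulC -!mulmxA.
  exact: erefl.
rewrite RC_sum /mxtrace; apply: eq_bigr => k _.
rewrite mxE RC_sum; apply: eq_bigr => j _.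
rewrite diagR_mul_r diagR_mul_l !RCM -mul_conj_sq adj_entry.
move: (M k j) => z; rewrite mulrAC -!mulrA; congr (_ * _); rewrite mulrA mulrC; congr (_ * _).
Qed.
Lemma abel_pos (n : nat) (y g : nat -> R) :
  (forall i j, (i <= j)%N -> (j < n)%N -> y i <= y j) ->
  (forall m, (m <= n)%N -> \sum_(k < m) g k <= 0) ->
  \sum_(k < n) g k = 0 ->
  0 <= \sum_(k < n) y k * g k.
Proof.
move=> ymon Gle Gn.
have claim : forall m, (m < n)%N ->
  y m * \sum_(k < m.+1) g k <= \sum_(k < m.+1) y k * g k.
  elim=> [|m IH] hm.
    by rewrite !big_ord_recr !big_ord0 /= !add0r.
  have hm' : (m < n)%N by apply: ltn_trans hm.
  have := IH hm'.
  rewrite [X in _ -> _ <= X]big_ord_recr [X in _ -> _ * X <= _]big_ord_recr /=.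
  have y1 : y m <= y m.+1 by apply: ymon.
  have G1 : \sum_(k < m.+1) g k <= 0 by apply: Gle.
  move: (\sum_(k < m.+1) g k) (\sum_(k < m.+1) y k * g k) y1 G1 => G S y1 G1 H.
  nra.
case: n ymon Gle Gn claim => [|n] ymon Gle Gn claim; first by rewrite big_ord0.
by have := claim n (ltnSn n); rewrite Gn mulr0.
Qed.

Lemma prefix_bound (n m : nat) (u c : nat -> R) :
  (m <= n)%N ->
  (forall i j, (i <= j)%N -> (j < n)%N -> u j <= u i) ->
  (forall j, (j < n)%N -> 0 <= c j <= 1) ->
  \sum_(j < n) c j = m%:R ->
  \sum_(j < n) u j * c j <= \sum_(j < m) u j.
Proof.
move=> mn umon c01 csum.
set t := u m.-1.
have Em : \sum_(j < m) u j = \sum_(j < n) u j * (j < m)%:R.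
  rewrite (big_ord_widen n u mn) big_mkcond /=; apply: eq_bigr => j _.
  by case: (j < m)%N; rewrite ?mulr1 ?mulr0.
have Em1 : \sum_(j < n) ((j < m)%N%:R : R) = m%:R.
  have <- : \sum_(j < m) (1:R) = m%:R by rewrite sumr_const card_ord.
  rewrite (big_ord_widen n (fun _ => (1:R)) mn) [RHS]big_mkcond /=; apply: eq_bigr => j _.
  by case: (j < m)%N.
rewrite Em -subr_ge0 -sumrB.
have -> : \sum_(j < n) (u j * (j < m)%:R - u j * c j) =
          \sum_(j < n) ((u j - t) * ((j < m)%:R - c j)) + t * (\sum_(j < n) ((j < m)%N%:R : R) - \sum_(j < n) c j).
  transitivity (\sum_(j < n) ((u j - t) * ((j < m)%:R - c j) + t * ((j < m)%:R - c j))).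
    by apply: eq_bigr => j _; ring.
  by rewrite big_split /= -mulr_sumr sumrB.
rewrite csum Em1 subrr mulr0 addr0; apply: sumr_ge0 => j _.
have /andP [c0 c1] := c01 j (ltn_ord j).
have jn := ltn_ord j.
case: ltnP => jm.
  have : t <= u j by apply: umon; lia.
  by move=> h; apply: mulr_ge0; rewrite subr_ge0.
have : u j <= t by apply: umon; lia.
by move=> h; rewrite sub0r; apply: mulr_le0; rewrite ?subr_le0 ?oppr_le0.
Qed.

Lemma rearr_nat (n : nat) (y u : nat -> R) (D : nat -> nat -> R) :
  (forall i j, (i <= j)%N -> (j < n)%N -> y i <= y j) ->
  (forall i j, (i <= j)%N -> (j < n)%N -> u j <= u i) ->
  (forall k j, 0 <= D k j) ->
  (forall k, (k < n)%N -> \sum_(j < n) D k j = 1) ->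
  (forall j, (j < n)%N -> \sum_(k < n) D k j = 1) ->
  \sum_(k < n) y k * u k <= \sum_(k < n) \sum_(j < n) y k * u j * D k j.
Proof.
move=> ymon umon D0 row col.
pose g k := \sum_(j < n) u j * D k j - u k.
have key : 0 <= \sum_(k < n) y k * g k.
  apply: abel_pos => //.
    move=> m mn; rewrite /g sumrB exchange_big /= subr_le0.
    under eq_bigr do rewrite -mulr_sumr.
    apply: (prefix_bound (c := fun j => \sum_(k < m) D k j)) => //.
      move=> j jn; apply/andP; split; first by apply: sumr_ge0.
      rewrite -(col j jn) (big_ord_widen n (fun k => D k j) mn) [X in _ <= X](bigID (fun k : 'I_n => (k < m)%N)) /=.
      by rewrite lerDl sumr_ge0.
    rewrite exchange_big /= (eq_bigr (fun _ => 1)) ?sumr_const ?card_ord //.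
    by move=> k _; apply: row; apply: leq_trans (ltn_ord k) mn.
  rewrite /g sumrB exchange_big /=.
  rewrite (eq_bigr (fun j : 'I_n => u j)) ?subrr // => j _.
  by rewrite -mulr_sumr col ?mulr1.
move: key; rewrite /g (eq_bigr (fun k : 'I_n => \sum_(j < n) y k * u j * D k j - y k * u k)).
  by rewrite sumrB subr_ge0.
by move=> k _; rewrite mulrBr mulr_sumr; congr (_ - _); apply: eq_bigr => j _; rewrite mulrA.
Qed.

Definition ext n (f : 'I_n -> R) (k : nat) : R :=
  if insub k is Some i then f i else 0.
Definition ext2 n (f : 'I_n -> 'I_n -> R) (k j : nat) : R :=
  if insub k is Some i then (if insub j is Some l then f i l else 0) else 0.
Lemma extE n (f : 'I_n -> R) (i : 'I_n) : ext f i = f i.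
Proof. by rewrite /ext valK. Qed.
Lemma ext2E n (f : 'I_n -> 'I_n -> R) (i j : 'I_n) : ext2 f i j = f i j.
Proof. by rewrite /ext2 !valK. Qed.

Lemma rearr_ord n (y u : 'I_n -> R) (D : 'I_n -> 'I_n -> R) :
  (forall i j : 'I_n, (i <= j)%N -> y i <= y j) ->
  (forall i j : 'I_n, (i <= j)%N -> u j <= u i) ->
  (forall k j, 0 <= D k j) ->
  (forall k, \sum_(j < n) D k j = 1) ->
  (forall j, \sum_(k < n) D k j = 1) ->
  \sum_(k < n) y k * u k <= \sum_(k < n) \sum_(j < n) y k * u j * D k j.
Proof.
move=> ymon umon D0 row col.
have E1 : \sum_(k < n) y k * u k = \sum_(k < n) ext y k * ext u k.
  by apply: eq_bigr => k _; rewrite !extE.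
have E2 : \sum_(k < n) \sum_(j < n) y k * u j * D k j =
          \sum_(k < n) \sum_(j < n) ext y k * ext u j * ext2 D k j.
  by apply: eq_bigr => k _; apply: eq_bigr => j _; rewrite !extE ext2E.
rewrite E1 E2; apply: rearr_nat.
- move=> i0 j ij jn; have i0N : (i0 < n)%N by apply: leq_ltn_trans ij jn.
  by rewrite -[i0]/(val (Ordinal i0N)) -[j]/(val (Ordinal jn)) !extE; apply: ymon.
- move=> i0 j ij jn; have i0N : (i0 < n)%N by apply: leq_ltn_trans ij jn.
  by rewrite -[i0]/(val (Ordinal i0N)) -[j]/(val (Ordinal jn)) !extE; apply: umon.
- move=> k j; rewrite /ext2; case: insub => // a; case: insub => // b.
- move=> k kn; rewrite -[k]/(val (Ordinal kn)) -(row (Ordinal kn)).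
  by apply: eq_bigr => j _; rewrite ext2E.
- move=> j jn; rewrite -[j]/(val (Ordinal jn)) -(col (Ordinal jn)).
  by apply: eq_bigr => k _; rewrite ext2E.
Qed.
End S.

Section S2.
Variable R : realType.
Local Notation C := (R[i]).

Lemma sqnorm_ge0 (z : C) : 0 <= sqnorm z.
Proof. by rewrite /sqnorm addr_ge0 // sqr_ge0. Qed.

Lemma RC_inj (a b : R) : RC a = RC b -> a = b.
Proof. by move/(congr1 (@complex.Re R)). Qed.

Lemma unitary_rowsum n (M : 'M[C]_n) k : unitary M -> \sum_(j < n) sqnorm (M k j) = 1.
Proof.
move=> /unitaryP [H _]; apply: RC_inj; rewrite (_ : RC 1 = 1) //.
have : (M *m adj M) k k = 1 by rewrite H mxE eqxx.
rewrite mxE RC_sum => <-; apply: eq_bigr => j _.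
by rewrite adj_entry mul_conj_sq.
Qed.

Lemma unitary_colsum n (M : 'M[C]_n) j : unitary M -> \sum_(k < n) sqnorm (M k j) = 1.
Proof.
move=> /unitaryP [_ H]; apply: RC_inj; rewrite (_ : RC 1 = 1) //.
have : (adj M *m M) j j = 1 by rewrite H mxE eqxx.
rewrite mxE RC_sum => <-; apply: eq_bigr => k _.
by rewrite adj_entry mulrC mul_conj_sq.
Qed.

Lemma trace_min n (A B : 'M[C]_n) (y u : 'I_n -> R) :
  unitary A -> unitary B ->
  (forall i j : 'I_n, (i <= j)%N -> y i <= y j) ->
  (forall i j : 'I_n, (i <= j)%N -> u j <= u i) ->
  \sum_(k < n) y k * u k <=
  complex.Re (\tr (A *m diagR y *m adj A *m (B *m diagR u *m adj B))).
Proof.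
move=> uA uB ym um; rewrite trace_form ReRC.
have uM : unitary (adj A *m B) by apply: unitaryM => //; apply: unitary_adj.
apply: rearr_ord => //.
- by move=> k j; apply: sqnorm_ge0.
- by move=> k; apply: unitary_rowsum.
- by move=> j; apply: unitary_colsum.
Qed.

Lemma sqnorm_delta n (k j : 'I_n) : sqnorm ((1%:M : 'M[C]_n) k j) = (k == j)%:R.
Proof. by rewrite mxE; case: (k == j); rewrite /sqnorm /= ?expr0n /= ?expr1n ?addr0. Qed.

Lemma trace_eq n (A : 'M[C]_n) (y u : 'I_n -> R) :
  unitary A ->
  complex.Re (\tr (A *m diagR y *m adj A *m (A *m diagR u *m adj A))) =
  \sum_(k < n) y k * u k.
Proof.
move=> /unitaryP [_ H]; rewrite trace_form ReRC H.
apply: eq_bigr => k _; rewrite (bigD1 k) //= sqnorm_delta eqxx mulr1 big1 ?addr0 //.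
by move=> j /negPf jk; rewrite sqnorm_delta eq_sym jk mulr0.
Qed.

Lemma ReD' (a b : C) : complex.Re (a + b) = complex.Re a + complex.Re b.
Proof. by case: a; case: b. Qed.
Lemma Re0' : complex.Re (0 : C) = 0. Proof. by []. Qed.
Lemma Re_sum I (s : seq I) (P : pred I) (F : I -> C) :
  complex.Re (\sum_(i <- s | P i) F i) = \sum_(i <- s | P i) complex.Re (F i).
Proof. exact: (big_morph _ ReD' Re0'). Qed.
Lemma ReMRC (z : C) (x : R) : complex.Re (z * RC x) = complex.Re z * x.
Proof. by case: z => a b; rewrite /RC /= mulr0 subr0. Qed.

Lemma tr3 n (A B D : 'M[C]_n) :
  \tr (A *m B *m D) = \sum_(i < n) \sum_(j < n) \sum_(k < n) A i j * B j k * D k i.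
Proof.
rewrite /mxtrace; apply: eq_bigr => i _; rewrite mxE.
rewrite exchange_big /=; apply: eq_bigr => k _; rewrite mxE mulr_suml.
by apply: eq_bigr.
Qed.

Lemma utility_expand (r a b c : R) : r != 0 ->
  utility r ((a + b) / 2 - c) =
  1 / r - expR (- (r * a) / 2) * expR (- (r * b) / 2) * (expR (r * c) / r).
Proof.
move=> r0; rewrite /utility.
have -> : - (r * ((a + b) / 2 - c)) = - (r * a) / 2 + - (r * b) / 2 + r * c.
  by field.
by rewrite !expRD; field.
Qed.

Lemma sum3_split (r : R) n (eps : 'I_n -> R) (P Q' Q : 'M[C]_n) : r != 0 ->
  \sum_(i < n) \sum_(j < n) \sum_(k < n)
    complex.Re (P i j * Q' j k * Q k i) * utility r ((eps i + eps j) / 2 - eps k) =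
  complex.Re (\tr (P *m Q' *m Q)) / r -
  complex.Re (\tr ((diagR (fun k => expR (- (r * eps k) / 2)) *m P *m
                     diagR (fun k => expR (- (r * eps k) / 2))) *m Q' *m
                   (diagR (fun k => expR (r * eps k) / r) *m Q))).
Proof.
move=> r0; rewrite !tr3 !Re_sum mulr_suml -sumrB; apply: eq_bigr => i _.
rewrite !Re_sum mulr_suml -sumrB; apply: eq_bigr => j _.
rewrite !Re_sum mulr_suml -sumrB; apply: eq_bigr => k _.
rewrite utility_expand // diagR_mul_l diagR_mul_r diagR_mul_l.
move: (expR (- (r * eps i) / 2)) (expR (- (r * eps j) / 2)) (expR (r * eps k) / r) => e1 e2 f.
have -> : RC e1 * P i j * RC e2 * Q' j k * (RC f * Q k i) =
          (P i j * Q' j k * Q k i) * RC (e1 * e2 * f).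
  by rewrite !RCM; ring.
by rewrite ReMRC; field.
Qed.

Lemma trace_id1 n (E U rho : 'M[C]_n) : unitary E -> unitary U ->
  \tr ((adj E *m rho *m E) *m (adj E *m adj U *m E) *m (adj E *m U *m E)) = \tr rho.
Proof.
move=> /unitaryP [E1 E2] /unitaryP [U1 U2].
have -> : (adj E *m rho *m E) *m (adj E *m adj U *m E) *m (adj E *m U *m E) =
          adj E *m (rho *m (E *m adj E) *m adj U *m (E *m adj E) *m U) *m E.
  by rewrite !mulmxA.
by rewrite E1 !mulmx1 -(mulmxA rho) U2 mulmx1 mxtrace_mulC mulmxA E1 mul1mx.
Qed.

Lemma trace_id2 n (E U rho De Dy : 'M[C]_n) :
  \tr ((De *m (adj E *m rho *m E) *m De) *m (adj E *m adj U *m E) *m (Dy *m (adj E *m U *m E))) =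
  \tr ((adj U *m E) *m Dy *m adj (adj U *m E) *m ((E *m De *m adj E) *m rho *m (E *m De *m adj E))).
Proof.
set M1 := De *m (adj E *m rho *m E) *m De.
set M2 := (adj E *m adj U *m E) *m (Dy *m (adj E *m U *m E)).
set N1 := adj U *m E *m Dy *m (adj E *m U) *m (E *m De *m adj E *m rho *m (E *m De)).
transitivity (\tr (M2 *m M1)).
  rewrite (mxtrace_mulC M2 M1) /M1 /M2 !mulmxA. exact: erefl.
transitivity (\tr (adj E *m N1)).
  rewrite /M1 /M2 /N1 !mulmxA. exact: erefl.
rewrite (mxtrace_mulC (adj E) N1) adjM adjK /N1 !mulmxA. exact: erefl.
Qed.

Lemma y_mono (r : R) n (eps : 'I_n -> R) : r != 0 ->
  (forall k l : 'I_n, (k < l)%N -> eps k < eps l) ->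
  forall i j : 'I_n, (i <= j)%N -> expR (r * eps i) / r <= expR (r * eps j) / r.
Proof.
move=> r0 epsm i j; rewrite leq_eqVlt => /orP [/eqP ij|ij].
  by have -> : i = j by apply: val_inj.
have e := epsm _ _ ij.
case: (ltrgtP r 0) => hr; last by move: r0; rewrite hr eqxx.
  apply: ler_wnM2r; first by rewrite invr_le0 ltW.
  by rewrite ler_expR; nra.
apply: ler_wpM2r; first by rewrite invr_ge0 ltW.
by rewrite ler_expR; nra.
Qed.
End S2.

Section S5.
Variable R : realType.
Local Notation C := (R[i]).

Lemma exp_util_formula (r : R) n (E : 'M[C]_n) (eps : 'I_n -> R) (rho U : 'M[C]_n) :
  unitary E -> unitary U -> r != 0 ->
  exp_utility r E eps rho U =
  complex.Re (\tr rho) / r -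
  complex.Re (\tr ((adj U *m E) *m diagR (fun k => expR (r * eps k) / r) *m adj (adj U *m E)
                   *m (expH r E eps *m rho *m expH r E eps))).
Proof.
move=> uE uU r0.
rewrite /exp_utility /melt sum3_split // (trace_id1 rho uE uU).
by rewrite (trace_id2 E U rho (diagR (fun k : 'I_n => expR (- (r * eps k) / 2)))
   (diagR (fun k : 'I_n => expR (r * eps k) / r))) /expH.
Qed.

Lemma opt_formula (r : R) n (E : 'M[C]_n) (eps : 'I_n -> R) (rho W : 'M[C]_n) (u : 'I_n -> R) :
  r != 0 -> unitary E ->
  (forall k l : 'I_n, (k < l)%N -> eps k < eps l) ->
  spec_decomp (expH r E eps *m rho *m expH r E eps) W u ->
  opt_utility r E eps rho =
  complex.Re (\tr rho) / r - \sum_(k < n) expR (r * eps k) / r * u k.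
Proof.
move=> r0 uE epsm [uW [um Hd]].
have ym := y_mono r0 epsm.
have uEW : unitary (E *m adj W) by apply: unitaryM; [exact: uE | exact: unitary_adj].
apply: sup_max.
  exists (E *m adj W); split; first exact: uEW.
  rewrite (exp_util_formula eps rho uE uEW r0).
  have -> : adj (E *m adj W) *m E = W.
    by rewrite adjM adjK -mulmxA; case: (unitaryP uE) => _ ->; rewrite mulmx1.
  by rewrite Hd (trace_eq _ _ uW).
move=> x [U [uU ->]].
rewrite (exp_util_formula eps rho uE uU r0) Hd lerD2l lerN2.
apply: trace_min; [| exact: uW | exact: ym | exact: um].
by apply: unitaryM; [exact: unitary_adj | exact: uE].
Qed.

Lemma erg_formula n (W Wa : 'M[C]_n) (y ua : 'I_n -> R) :
  unitary W -> unitary Wa ->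
  (forall i j : 'I_n, (i <= j)%N -> y i <= y j) ->
  (forall i j : 'I_n, (i <= j)%N -> ua j <= ua i) ->
  ergotropy (W *m diagR y *m adj W) (Wa *m diagR ua *m adj Wa) =
  \sum_(k < n) \sum_(j < n) y k * ua j * sqnorm ((adj W *m Wa) k j) -
  \sum_(k < n) y k * ua k.
Proof.
move=> uW uWa ym um.
have HV : forall V : 'M[C]_n, W *m diagR y *m adj W *m V *m (Wa *m diagR ua *m adj Wa) *m adj V
   = W *m diagR y *m adj W *m ((V *m Wa) *m diagR ua *m adj (V *m Wa)).
  by move=> V; rewrite adjM !mulmxA.
have uWW : unitary (W *m adj Wa) by apply: unitaryM; [exact: uW | exact: unitary_adj].
apply: sup_max.
  exists (W *m adj Wa); split; first exact: uWW.
  rewrite HV trace_form ReRC.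
  have -> : W *m adj Wa *m Wa = W.
    by rewrite -mulmxA; case: (unitaryP uWa) => _ ->; rewrite mulmx1.
  by rewrite (trace_eq _ _ uW).
move=> x [V [uV ->]].
rewrite HV trace_form ReRC lerD2l lerN2.
apply: trace_min; [exact: uW | | exact: ym | exact: um].
by apply: unitaryM; [exact: uV | exact: uWa].
Qed.
End S5.

Section S6.
Variable R : realType.
Local Notation C := (R[i]).

Lemma sum_tens m n (F : 'I_(m * n) -> C) :
  \sum_(x < m * n) F x = \sum_(i < m) \sum_(b < n) F (mxtens_index (i, b)).
Proof.
rewrite pair_big /=.
rewrite (reindex (@mxtens_index m n)) /=; last first.
  by exists (@mxtens_unindex m n) => x _; rewrite (mxtens_indexK, mxtens_unindexK).
by apply: eq_bigr => -[i b].
Qed.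

Lemma sum_delta_l m (i : 'I_m) (f : 'I_m -> C) :
  \sum_(k < m) (i == k)%:R * f k = f i.
Proof.
rewrite (bigD1 i) //= eqxx mul1r big1 ?addr0 // => k /negPf ki.
by rewrite eq_sym ki mul0r.
Qed.

Lemma sum_delta_r m (j : 'I_m) (f : 'I_m -> C) :
  \sum_(k < m) f k * (k == j)%:R = f j.
Proof.
rewrite (bigD1 j) //= eqxx mulr1 big1 ?addr0 // => k /negPf kj.
by rewrite kj mulr0.
Qed.

Lemma tens1E m n (P : 'M[C]_n) i b i' b' :
  ((1%:M : 'M[C]_m) *t P) (mxtens_index (i, b)) (mxtens_index (i', b')) =
  (i == i')%:R * P b b'.
Proof. by rewrite tensmxE mxE. Qed.

Lemma ptrace_cyc m n (P : 'M[C]_n) (M : 'M[C]_(m * n)) :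
  ptraceA (((1%:M : 'M[C]_m) *t P) *m M) = ptraceA (M *m ((1%:M : 'M[C]_m) *t P)).
Proof.
apply/matrixP => i j; rewrite !mxE.
transitivity (\sum_(b < n) \sum_(b' < n) P b b' * M (mxtens_index (i, b')) (mxtens_index (j, b))).
  apply: eq_bigr => b _; rewrite mxE sum_tens.
  under eq_bigr do under eq_bigr do rewrite tens1E -mulrA.
  under eq_bigr do rewrite -mulr_sumr.
  by rewrite sum_delta_l.
rewrite exchange_big /=; apply: eq_bigr => b _; rewrite mxE sum_tens.
rewrite exchange_big /=.
apply: eq_bigr => b' _.
rewrite (eq_bigr (fun k : 'I_m => (M (mxtens_index (i, b)) (mxtens_index (k, b')) * P b' b) * (k == j)%:R)); last first.
  by move=> k _; rewrite tens1E; ring.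
by rewrite sum_delta_r mulrC.
Qed.

Lemma ptrace_sum m n I (r : seq I) (Pr : pred I) (F : I -> 'M[C]_(m * n)) :
  ptraceA (\sum_(a <- r | Pr a) F a) = \sum_(a <- r | Pr a) ptraceA (F a).
Proof.
apply/matrixP => i j; rewrite !mxE summxE.
under eq_bigr do rewrite summxE.
rewrite exchange_big /=; apply: eq_bigr => a _; by rewrite mxE.
Qed.

Lemma ptrace0 m n : ptraceA (0 : 'M[C]_(m * n)) = (0 : 'M[C]_m).
Proof. by apply/matrixP => i j; rewrite !mxE big1 // => b _; rewrite mxE. Qed.

Lemma sum_proj n (B : 'M[C]_n) : unitary B -> \sum_(a < n) projA B a = 1%:M.
Proof.
move=> /unitaryP [H _]; rewrite -H; apply/matrixP => i j.
rewrite summxE mxE; apply: eq_bigr => a _.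
by rewrite /projA mxE big_ord1 !mxE.
Qed.

Lemma proj_idem n (B : 'M[C]_n) a : unitary B -> projA B a *m projA B a = projA B a.
Proof.
move=> /unitaryP [_ H].
have e : adj (col a B) *m col a B = 1%:M.
  apply/matrixP => i j; rewrite !ord1 mxE.
  have := congr1 (fun M : 'M[C]_n => M a a) H; rewrite !mxE eqxx => <-.
  by apply: eq_bigr => k _; rewrite !mxE.
by rewrite /projA mulmxA -(mulmxA (col a B)) e mulmx1.
Qed.

Lemma lift_idem m n (B : 'M[C]_n) a : unitary B ->
  (liftA B a : 'M[C]_(m * n)) *m liftA B a = liftA B a.
Proof. by move=> uB; rewrite /liftA tensmx_mul mulmx1 proj_idem. Qed.

Lemma sum_lift m n (B : 'M[C]_n) : unitary B ->
  \sum_(a < n) (liftA B a : 'M[C]_(m * n)) = 1%:M.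
Proof.
move=> uB; apply/matrixP => x y.
case: (mxtens_indexP x) => i b; case: (mxtens_indexP y) => i' b'.
rewrite summxE.
under eq_bigr do rewrite /liftA tens1E.
rewrite -mulr_sumr.
have := congr1 (fun M : 'M[C]_n => M b b') (sum_proj uB); rewrite summxE => ->.
rewrite !mxE (inj_eq (can_inj (@mxtens_indexK m n))) xpair_eqE.
by case: (i == i'); case: (b == b'); rewrite ?mul1r ?mul0r.
Qed.

Lemma rhoS_decomp m n (B : 'M[C]_n) (rho : 'M[C]_(m * n)) : unitary B ->
  ptraceA rho = \sum_(a < n) ptraceA (liftA B a *m rho *m liftA B a).
Proof.
move=> uB.
under eq_bigr do rewrite -mulmxA /liftA ptrace_cyc -mulmxA -/(liftA B _) (@lift_idem m n B _ uB).
by rewrite -ptrace_sum -mulmx_sumr (sum_lift _ uB) mulmx1.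
Qed.
End S6.

Section S7.
Variable R : realType.
Local Notation C := (R[i]).

Lemma quad n (N : 'M[C]_n) (v : 'cV[C]_n) :
  (adj v *m N *m v) 0 0 = \sum_(k < n) \sum_(l < n) Num.conj (v k 0) * N k l * v l 0.
Proof.
rewrite mxE exchange_big /=; apply: eq_bigr => k _.
rewrite mxE mulr_suml; apply: eq_bigr => l _.
by rewrite mxE !mxE.
Qed.

Lemma sqnorm0 (z : C) : sqnorm z = 0 -> z = 0.
Proof.
case: z => a b; rewrite /sqnorm /= => /eqP.
rewrite paddr_eq0 ?sqr_ge0 // !sqrf_eq0 => /andP [/eqP -> /eqP ->] //.
Qed.

Lemma sum_delta2_l m (x y : 'I_m) (c : C) (f : 'I_m -> C) :
  \sum_(k < m) ((k == x)%:R + (k == y)%:R * c) * f k = f x + c * f y.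
Proof.
under eq_bigr do rewrite mulrDl.
rewrite big_split /=; congr (_ + _).
  by rewrite -(sum_delta_l x f); apply: eq_bigr => k _; rewrite eq_sym.
rewrite -(sum_delta_l y f) mulr_sumr; apply: eq_bigr => k _; rewrite eq_sym; ring.
Qed.

Lemma sum_delta2_r m (x y : 'I_m) (c : C) (f : 'I_m -> C) :
  \sum_(k < m) f k * ((k == x)%:R + (k == y)%:R * c) = f x + f y * c.
Proof.
under eq_bigr do rewrite mulrDr.
rewrite big_split /= sum_delta_r; congr (_ + _).
rewrite -(sum_delta_r y f) mulr_suml; apply: eq_bigr => k _; ring.
Qed.

Lemma conjNK' (z : C) : Num.conj (- Num.conj z) = - z.
Proof. by case: z => a b; apply/eqP; rewrite eq_complex /= !opprK !eqxx. Qed.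

Lemma psd_zero n (N : 'M[C]_n) : psd N -> complex.Re (\tr N) <= 0 -> N = 0.
Proof.
move=> [herm pos] tr.
have qf : forall x y (c : C), 0 <= N x x + N x y * c + Num.conj c * (N y x + N y y * c).
  move=> x y c.
  pose v : 'cV[C]_n := \col_k ((k == x)%:R + (k == y)%:R * c).
  have := pos v; rewrite quad.
  have -> : \sum_(k < n) \sum_(l < n) Num.conj (v k 0) * N k l * v l 0 =
            \sum_(k < n) ((k == x)%:R + (k == y)%:R * Num.conj c) * (N k x + N k y * c).
    apply: eq_bigr => k _.
    rewrite mxE rmorphD rmorphM !rmorph_nat.
    rewrite -(sum_delta2_r x y c (N k)) mulr_sumr; apply: eq_bigr => l _.
    by rewrite mxE mulrA.
  by rewrite sum_delta2_l.
have herm_e : forall x y, N y x = Num.conj (N x y).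
  move=> x y; have h := congr1 (fun M : 'M[C]_n => M y x) herm.
  by rewrite /= adj_entry in h; rewrite h.
have diag : forall x, 0 <= N x x.
  by move=> x; have := qf x x 0; rewrite mulr0 addr0 rmorph0 mul0r addr0.
have diagRe : forall x, 0 <= complex.Re (N x x).
  by move=> x; have := diag x; rewrite lecE => /andP [_ ->].
have diag0 : forall x, N x x = 0.
  have hs : \sum_(x < n) complex.Re (N x x) = 0.
    apply/le_anti/andP; split; last by apply: sumr_ge0 => x _.
    by move: tr; rewrite /mxtrace Re_sum.
  move=> x; have hre := @psumr_eq0P _ _ _ _ (fun x _ => diagRe x) hs x isT.
  have := diag x; rewrite lecE => /andP [/eqP him _].
  move: hre him; case: (N x x) => a b /= -> ->; by [].
apply/matrixP => x y; rewrite mxE.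
have := qf x y (- Num.conj (N x y)).
rewrite !diag0 (herm_e x y). rewrite conjNK' mul0r addr0 add0r.
rewrite mulrN mulNr mul_conj_sq -opprD.
rewrite lecE => /andP [_]; rewrite /= => h.
apply: sqnorm0; apply/le_anti/andP; split; last exact: sqnorm_ge0.
move: h; rewrite /RC /=. lra.
Qed.
End S7.

Section S8.
Variable R : realType.
Local Notation C := (R[i]).

Lemma conjK' (z : C) : Num.conj (Num.conj z) = z.
Proof. by case: z => a b; apply/eqP; rewrite eq_complex /= !opprK !eqxx. Qed.

Lemma lift_herm m n (B : 'M[C]_n) a : adj (liftA B a : 'M[C]_(m * n)) = liftA B a.
Proof.
apply/matrixP => x y.
case: (mxtens_indexP x) => i b; case: (mxtens_indexP y) => i' b'.
rewrite adj_entry /liftA !tens1E rmorphM rmorph_nat eq_sym; congr (_ * _).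
rewrite /projA !mxE !big_ord1 !mxE. rewrite rmorphM /=. rewrite mulrC; congr (_ * _); first [rewrite conjCK | rewrite conjK' | exact: conjK' | exact: conjCK].
done.
Qed.

Lemma N_psd m n (B : 'M[C]_n) a (rho : 'M[C]_(m * n)) :
  psd rho -> psd (liftA B a *m rho *m liftA B a).
Proof.
move=> [herm pos]; split.
  have herm' : adj rho = rho := herm.
  by unfold Defs.hermitian; rewrite !adjM lift_herm herm' mulmxA.
move=> v.
have -> : adj v *m (liftA B a *m rho *m liftA B a) *m v =
          adj (liftA B a *m v) *m rho *m (liftA B a *m v).
  by rewrite adjM lift_herm !mulmxA.
exact: pos.
Qed.

Lemma tr_N m n (B : 'M[C]_n) a (rho : 'M[C]_(m * n)) : unitary B ->
  \tr (liftA B a *m rho *m liftA B a) = \tr (liftA B a *m rho).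
Proof.
move=> uB; rewrite mxtrace_mulC mulmxA.
by rewrite (@lift_idem R m n B a uB).
Qed.

Lemma N_zero m n (B : 'M[C]_n) a (rho : 'M[C]_(m * n)) : unitary B -> psd rho ->
  prob B rho a <= 0 -> liftA B a *m rho *m liftA B a = 0.
Proof.
move=> uB prho hp; apply: psd_zero; first exact: N_psd.
by rewrite (@tr_N m n B a rho uB).
Qed.
End S8.

Section S9.
Variable R : realType.
Local Notation C := (R[i]).

Lemma ReRCM (x : R) (z : C) : complex.Re (RC x * z) = x * complex.Re z.
Proof. by rewrite mulrC ReMRC mulrC. Qed.

Lemma tr_sum n I (r : seq I) (P : pred I) (F : I -> 'M[C]_n) :
  \tr (\sum_(i <- r | P i) F i) = \sum_(i <- r | P i) \tr (F i).
Proof. exact: (big_morph _ (@mxtraceD _ _) (@mxtrace0 _ _)). Qed.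

Lemma lin_cond dS dA (B : 'M[C]_dA) (rho : 'M[C]_(dS * dA)) (K : 'M[C]_dS) :
  unitary B -> psd rho ->
  \sum_(a < dA | 0 < prob B rho a) prob B rho a * complex.Re (\tr (K *m cond_state B rho a))
  = complex.Re (\tr (K *m ptraceA rho)).
Proof.
move=> uB prho.
rewrite (rhoS_decomp rho uB) [in RHS](bigID (fun a => 0 < prob B rho a)) /=.
have Z : \sum_(a < dA | ~~ (0 < prob B rho a)) ptraceA (liftA B a *m rho *m liftA B a) = 0.
  apply: big1 => a hn; have hp : prob B rho a <= 0 by rewrite leNgt.
  by rewrite (N_zero uB prho hp) ptrace0.
rewrite Z addr0.
rewrite mulmx_sumr tr_sum Re_sum; apply: eq_bigr => a hp.
rewrite /cond_state -scalemxAr mxtraceZ ReRCM mulrA mulfV ?mul1r //.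
by rewrite gt_eqF.
Qed.

Lemma sum_delta_R n (k : 'I_n) (f : 'I_n -> R) :
  \sum_(j < n) f j * (j == k)%:R = f k.
Proof.
rewrite (bigD1 k) //= eqxx mulr1 big1 ?addr0 // => j /negPf jk.
by rewrite jk mulr0.
Qed.
Lemma tr_cyc3 n (H M Xm : 'M[C]_n) : \tr (H *m (Xm *m M *m Xm)) = \tr (Xm *m H *m Xm *m M).
Proof.
rewrite (mxtrace_mulC H) -(mulmxA (Xm *m M)) (mxtrace_mulC (Xm *m M)) !mulmxA.
exact: erefl.
Qed.
End S9.

Local Close Scope complex_scope.
Unset Implicit Arguments.

Theorem lemma1 (R : realType) (dS dA : nat) (r : R)
    (E : 'M[R[i]]_dS) (eps : 'I_dS -> R)
    (B : 'M[R[i]]_dA) (rhoSA : 'M[R[i]]_(dS * dA)) :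
  r != 0 ->
  (forall k l : 'I_dS, (k < l)%N -> eps k < eps l) ->
  unitary E ->
  unitary B ->
  density rhoSA ->
  forall (W : 'M[R[i]]_dS) (u : 'I_dS -> R)
         (Wa : 'I_dA -> 'M[R[i]]_dS) (ua : 'I_dA -> 'I_dS -> R),
  spec_decomp (expH r E eps *m ptraceA rhoSA *m expH r E eps) W u ->
  (forall a : 'I_dA, 0 < prob B rhoSA a ->
     spec_decomp (expH r E eps *m cond_state B rhoSA a *m expH r E eps)
                 (Wa a) (ua a)) ->
  let y := fun k : 'I_dS => expR (r * eps k) / r in
  let Ht := W *m diagR y *m adj W in
  let rt := fun a : 'I_dA => expH r E eps *m cond_state B rhoSA a *m expH r E eps in
  [/\ daemonic_utility r E eps B rhoSA - opt_utility r E eps (ptraceA rhoSA)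
        = \sum_(a < dA | 0 < prob B rhoSA a) prob B rhoSA a * ergotropy Ht (rt a),
      0 <= \sum_(a < dA | 0 < prob B rhoSA a) prob B rhoSA a * ergotropy Ht (rt a)
    & forall a : 'I_dA, 0 < prob B rhoSA a ->
        ergotropy Ht (rt a)
        = \sum_(k < dS) \sum_(j < dS)
            ua a j * (sqnorm ((adj W *m Wa a) k j) - (j == k)%:R) * y k].
Proof.
move=> r0 epsm uE uB [prho _] W u Wa ua hS ha y Ht rt.
have ym := y_mono r0 epsm.
have [uW [um HS]] := hS.
pose S a := \sum_(k < dS) y k * ua a k.
pose K' := expH r E eps *m Ht *m expH r E eps.
have rtE : forall a, 0 < prob B rhoSA a ->
  expH r E eps *m cond_state B rhoSA a *m expH r E eps = Wa a *m diagR (ua a) *m adj (Wa a).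
  by move=> a hp; have [_ [_ ->]] := ha a hp.
have ergE : forall a, 0 < prob B rhoSA a ->
    ergotropy Ht (rt a) = complex.Re (\tr (K' *m cond_state B rhoSA a)) - S a.
  move=> a hp; have [uWa [uma _]] := ha a hp.
  rewrite /rt (rtE a hp) (erg_formula uW uWa ym uma).
  congr (_ - _).
  rewrite -(ReRC (\sum_(k < dS) \sum_(j < dS) _)) -trace_form -(rtE a hp) /K' /Ht.
  by rewrite tr_cyc3.
have ergpos : forall a, 0 < prob B rhoSA a -> S a <= complex.Re (\tr (K' *m cond_state B rhoSA a)).
  move=> a hp; have [uWa [uma _]] := ha a hp.
  rewrite /K' /Ht -tr_cyc3 (rtE a hp).
  by apply: trace_min; [exact: uW | exact: uWa | exact: ym | exact: uma].
have optS : opt_utility r E eps (ptraceA rhoSA) =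
    complex.Re (\tr (1%:M *m ptraceA rhoSA)) / r - \sum_(k < dS) y k * u k.
  by rewrite mul1mx (opt_formula r0 uE epsm hS).
have yu : \sum_(k < dS) y k * u k = complex.Re (\tr (K' *m ptraceA rhoSA)).
  by rewrite /K' /Ht -tr_cyc3 HS (trace_eq _ _ uW).
have optA : forall a, 0 < prob B rhoSA a ->
    opt_utility r E eps (cond_state B rhoSA a) =
    complex.Re (\tr (1%:M *m cond_state B rhoSA a)) / r - S a.
  by move=> a hp; rewrite mul1mx (opt_formula r0 uE epsm (ha a hp)).
have D1 : daemonic_utility r E eps B rhoSA =
    (\sum_(a < dA | 0 < prob B rhoSA a) prob B rhoSA a * complex.Re (\tr (1%:M *m cond_state B rhoSA a))) / r
    - \sum_(a < dA | 0 < prob B rhoSA a) prob B rhoSA a * S a.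
  rewrite /daemonic_utility mulr_suml -sumrB; apply: eq_bigr => a hp.
  by rewrite (optA a hp); rewrite mulrBr mulrA.
have D2 : \sum_(a < dA | 0 < prob B rhoSA a) prob B rhoSA a * ergotropy Ht (rt a) =
    \sum_(a < dA | 0 < prob B rhoSA a) prob B rhoSA a * complex.Re (\tr (K' *m cond_state B rhoSA a))
    - \sum_(a < dA | 0 < prob B rhoSA a) prob B rhoSA a * S a.
  by rewrite -sumrB; apply: eq_bigr => a hp; rewrite (ergE a hp) mulrBr.
split.
- rewrite D1 D2 (lin_cond _ uB prho) (lin_cond _ uB prho) optS yu.
  ring.
- apply: sumr_ge0 => a hp; apply: mulr_ge0; first exact: ltW.
  by rewrite (ergE a hp) subr_ge0; apply: ergpos.
- move=> a hp; have [uWa [uma _]] := ha a hp.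
  rewrite /rt (rtE a hp) (erg_formula uW uWa ym uma).
  symmetry; rewrite -sumrB; apply: eq_bigr => k _.
  rewrite -(sum_delta_R k (fun j => y k * ua a j)) -sumrB; apply: eq_bigr => j _.
  rewrite /y; ring.
Qed.
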